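(* Let $f(x)$ be a complex-valued function of a real variable defined to the right of $0$, and let $g(x)=f(1/\log x)$, defined in a neighbourhood of $\infty$ (equivalently, let $g$ be any complex-valued function defined in a neighbourhood of $\infty$ and $f(x)=g(e^{1/x})$ for $x>0$ small). Let $a_n\in\mathbb C$ for $n\ge0$, let $N$ be a positive integer, and let $L(x)$ be any function with $L(x)=\log x+o\big((\log x)^{-(N-2)}\big)$ $(x\to\infty)$. Then the following asymptotic expansions (each with terms $n=0,\dots,N$, i.e. of order $N+1$) are equivalent: (1) $f(x)\sim\sum_{n=0}^N a_nx^n$ $(x\to0^+)$; (2) $f(1/x)=g(e^x)\sim\sum_{n=0}^N\frac{a_n}{x^n}$ $(x\to\infty)$; (3) $g(x)\sim\sum_{n=0}^N\frac{a_n}{L(x)^n}$ $(x\to\infty)$; (4) $g(x)\sim\sum_{n=0}^N\frac{a_n}{(\log x)^n}$ $(x\to\infty)$; (5) $g(x)\sim\sum_{n=0}^N\frac{a_n}{(H_x-\gamma)^n}$ $(x\to\infty)$; (6) $g(x)\sim\sum_{n=0}^N\frac{a_n}{\Psi(x)^n}$ $(x\to\infty)$.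
   Context: $\gamma$ is the Euler–Mascheroni constant, $\Psi=\Gamma'/\Gamma$ is the digamma function, and $H_x=\Psi(x+1)+\gamma=\int_0^1\frac{1-t^x}{1-t}dt$ for real $x>0$ (interpolating the harmonic numbers). An asymptotic expansion $h\sim\sum_{n=0}^N a_n\varphi_n$ of order $N+1$ with respect to an asymptotic sequence $\{\varphi_n\}$ (i.e. $\varphi_{n+1}=o(\varphi_n)$) means $h-\sum_{k=0}^n a_k\varphi_k=o(\varphi_n)$ for all $n\le N$ (equivalently for $n=N$). *)

(* Defs.v *)
From Stdlib Require Import Reals.
From Coquelicot Require Import Coquelicot.
Open Scope R_scope.

Definition asymp_expansion (F : (R -> Prop) -> Prop) (h : R -> C)
  (a : nat -> C) (phi : nat -> R -> R) (N : nat) : Prop :=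
  forall n : nat, (n <= N)%nat ->
  forall eps : R, 0 < eps ->
  F (fun x => Cmod (Cminus (h x)
        (sum_n (fun k => Cmult (a k) (RtoC (phi k x))) n))
      <= eps * Rabs (phi n x)).

Definition little_o_R (F : (R -> Prop) -> Prop) (u v : R -> R) : Prop :=
  forall eps : R, 0 < eps -> F (fun x => Rabs (u x) <= eps * Rabs (v x)).

Definition euler_gamma : R :=
  real (Lim_seq (fun n : nat =>
    sum_n (fun k : nat => / INR (S k)) (pred n) - ln (INR n))).

Definition Hx (x : R) : R :=
  RInt (fun t => (1 - Rpower t x) / (1 - t)) 0 1.

(* Digamma function via the identity H_x = Psi(x+1) + gamma,
   i.e. Psi(x) = H_(x-1) - gamma (valid for x > 1). *)
Definition Psi (x : R) : R := Hx (x - 1) - euler_gamma.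

(* Main.v *)
Require Import Defs.
From Stdlib Require Import Reals Lra Lia Psatz FunctionalExtensionality.
From Coquelicot Require Import Coquelicot.
Open Scope R_scope.

Definition hs (n : nat) : R := sum_n (fun k : nat => / INR (S k)) (pred n).
Definition Dg (n : nat) : R := hs n - ln (INR n).
Definition Eg (n : nat) : R := hs n - ln (INR n + 1).

Lemma hs_S n : (1 <= n)%nat -> hs (S n) = hs n + / INR (S n).
Proof.
  intros H. unfold hs. destruct n; [lia|]. simpl pred. rewrite sum_Sn. reflexivity.
Qed.

Lemma hs_1 : hs 1 = 1.
Proof. unfold hs; simpl. rewrite sum_O. simpl. lra. Qed.

Lemma ln_le_m1 y : 0 < y -> ln y <= y - 1.
Proof.
  intros Hy. rewrite <- (ln_exp (y - 1)). apply ln_le; auto.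
  pose proof (exp_ineq1_le (y - 1)). lra.
Qed.

Lemma ln_step_lo (n : nat) : (1 <= n)%nat -> / INR (S n) <= ln (INR (S n)) - ln (INR n).
Proof.
  intros H. rewrite S_INR. assert (1 <= INR n) by (apply (le_INR 1); lia).
  assert (E : ln (INR n / (INR n + 1)) <= INR n / (INR n + 1) - 1) by (apply ln_le_m1; apply Rdiv_lt_0_compat; lra).
  rewrite ln_div in E by lra.
  replace (INR n / (INR n + 1) - 1) with (- / (INR n + 1)) in E by (field; lra).
  lra.
Qed.

Lemma ln_step_hi (n : nat) : (1 <= n)%nat -> ln (INR n + 1) - ln (INR n) <= / INR n.
Proof.
  intros H. assert (1 <= INR n) by (apply (le_INR 1); lia).
  rewrite <- ln_div by lra.
  eapply Rle_trans; [apply ln_le_m1; apply Rdiv_lt_0_compat; lra|].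
  right; field; lra.
Qed.

Lemma Dg_decr n : Dg (S n) <= Dg n.
Proof.
  destruct n.
  - unfold Dg. rewrite hs_1. unfold hs; simpl. rewrite sum_O. simpl. rewrite ln_1.
    replace (ln 0) with 0. lra. unfold ln. destruct (Rlt_dec 0 0); [exfalso; apply (Rlt_irrefl 0); assumption|reflexivity].
  - unfold Dg. rewrite hs_S by lia. pose proof (ln_step_lo (S n) ltac:(lia)). lra.
Qed.

Lemma Eg_incr n : (1 <= n)%nat -> Eg n <= Eg (S n).
Proof.
  intros H. unfold Eg. rewrite hs_S by lia.
  pose proof (ln_step_hi (S n) ltac:(lia)). rewrite S_INR in *. lra.
Qed.

Lemma Dg_mono m k : (m <= k)%nat -> Dg k <= Dg m.
Proof.
  induction 1. lra. pose proof (Dg_decr m0). lra.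
Qed.

Lemma Eg_mono n k : (1 <= n)%nat -> (n <= k)%nat -> Eg n <= Eg k.
Proof.
  intros Hn. induction 1. lra. pose proof (Eg_incr m ltac:(lia)). lra.
Qed.

Lemma Eg_le_Dg n : (1 <= n)%nat -> Eg n <= Dg n.
Proof.
  intros H. unfold Eg, Dg. assert (1 <= INR n) by (apply (le_INR 1); lia).
  assert (ln (INR n) < ln (INR n + 1)) by (apply ln_increasing; lra). lra.
Qed.

Lemma Eg_le_Dg' n m : (1 <= n)%nat -> Eg n <= Dg m.
Proof.
  intros H. pose proof (Eg_mono n (max n m) H ltac:(lia)).
  pose proof (Eg_le_Dg (max n m) ltac:(lia)). pose proof (Dg_mono m (max n m) ltac:(lia)). lra.
Qed.

Lemma gamma_lim : is_lim_seq Dg euler_gamma.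
Proof.
  assert (Hex : ex_finite_lim_seq Dg).
  { apply ex_finite_lim_seq_decr with (Eg 1). apply Dg_decr. intros; apply Eg_le_Dg'; lia. }
  destruct Hex as [l Hl].
  change (is_lim_seq Dg (real (Lim_seq Dg))).
  rewrite (is_lim_seq_unique _ _ Hl). exact Hl.
Qed.

Lemma gamma_bounds n : (1 <= n)%nat -> Eg n <= euler_gamma <= Dg n.
Proof.
  intros H. split.
  - assert (T := is_lim_seq_le (fun _ => Eg n) Dg (Eg n) euler_gamma (fun m => Eg_le_Dg' n m H)
       (is_lim_seq_const _) gamma_lim). exact T.
  - apply (is_lim_seq_decr_compare Dg euler_gamma gamma_lim Dg_decr).
Qed.
Definition ig (y t : R) : R := (1 - Rpower t y) / (1 - t).
Definition Ext (y t : R) : R :=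
  if Rle_dec t 0 then 1 else if Rle_dec 1 t then y else ig y t.

Lemma cont_eps (f : R -> R) z :
  (forall eps, 0 < eps -> exists d, 0 < d /\ forall t, Rabs (t - z) < d -> Rabs (f t - f z) < eps) ->
  continuous f z.
Proof.
  intros H. apply filterlim_locally. intros eps.
  destruct (H eps (cond_pos eps)) as [d [Hd Ht]].
  exists (mkposreal d Hd). intros t Hb. apply Ht in Hb.
  unfold ball; simpl; unfold AbsRing_ball, abs, minus, plus, opp; simpl. exact Hb.
Qed.

Lemma Rpower_1_base a : Rpower 1 a = 1.
Proof. unfold Rpower. rewrite ln_1, Rmult_0_r, exp_0. reflexivity. Qed.

Lemma Ext_cont y z : 0 < y -> 0 <= z <= 1 -> continuous (Ext y) z.
Proof.
  intros Hy Hz.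
  destruct (Req_dec z 0) as [Z0|Z0]; [|destruct (Req_dec z 1) as [Z1|Z1]].
  - subst z. apply cont_eps. intros eps He.
    set (e4 := eps / 4).
    assert (He4 : 0 < e4) by (unfold e4; lra).
    set (d := Rmin (1/2) (Rmin e4 (exp (ln e4 / y)))).
    assert (Hd : 0 < d) by (unfold d; repeat apply Rmin_glb_lt; try lra; apply exp_pos).
    assert (D1 : d <= 1/2) by apply Rmin_l.
    assert (D2 : d <= e4) by (eapply Rle_trans; [apply Rmin_r| apply Rmin_l]).
    assert (D3 : d <= exp (ln e4 / y)) by (eapply Rle_trans; [apply Rmin_r| apply Rmin_r]).
    clearbody d.
    exists d. split; auto. intros t Ht.
    assert (E0 : Ext y 0 = 1) by (unfold Ext; destruct (Rle_dec 0 0); [reflexivity|lra]).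
    rewrite E0. rewrite Rminus_0_r in Ht.
    unfold Ext. destruct (Rle_dec t 0). rewrite Rminus_diag, Rabs_R0; lra.
    assert (Ht1 : t < 1/2) by (pose proof (Rle_abs t); lra).
    destruct (Rle_dec 1 t); [lra|].
    assert (Hte : t < e4) by (pose proof (Rle_abs t); lra).
    assert (Htx : t < exp (ln e4 / y)) by (pose proof (Rle_abs t); lra).
    assert (Hp : Rpower t y < e4).
    { unfold Rpower. assert (ln t < ln e4 / y).
      { rewrite <- (ln_exp (ln e4 / y)). apply ln_increasing; lra. }
      rewrite <- (exp_ln e4) by lra. apply exp_increasing.
      apply Rmult_lt_reg_r with (/ y). apply Rinv_0_lt_compat; lra.
      replace (y * ln t * / y) with (ln t) by (field; lra). exact H. }
    assert (Hp0 : 0 < Rpower t y) by (unfold Rpower; apply exp_pos).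
    unfold ig. replace ((1 - Rpower t y) / (1 - t) - 1) with ((t - Rpower t y) * / (1 - t)) by (field; lra).
    rewrite Rabs_mult, (Rabs_pos_eq (/ (1 - t))) by (left; apply Rinv_0_lt_compat; lra).
    assert (/ (1 - t) <= 2).
    { replace 2 with (/ (1/2)) by field. apply Rinv_le_contravar; lra. }
    assert (Rabs (t - Rpower t y) < 2 * e4) by (apply Rabs_def1; lra).
    pose proof (Rabs_pos (t - Rpower t y)). pose proof (Rinv_0_lt_compat (1 - t) ltac:(lra)).
    unfold e4 in *. nra.
  - subst z. apply cont_eps. intros eps He.
    destruct (derivable_pt_lim_power 1 y Rlt_0_1 eps He) as [d Hd].
    exists (Rmin d 1). split. apply Rmin_glb_lt; [apply cond_pos|lra].
    intros t Ht. pose proof (Rmin_l d 1). pose proof (Rmin_r d 1).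
    assert (E1 : Ext y 1 = y) by (unfold Ext; destruct (Rle_dec 1 0); [lra|]; destruct (Rle_dec 1 1); [reflexivity|lra]).
    rewrite E1. pose proof (Rle_abs (t - 1)). pose proof (Rle_abs (- (t - 1))). rewrite Rabs_Ropp in *.
    unfold Ext. destruct (Rle_dec t 0). lra.
    destruct (Rle_dec 1 t). rewrite Rminus_diag, Rabs_R0; lra.
    assert (Hh := Hd (t - 1) ltac:(lra) ltac:(lra)).
    replace (1 + (t - 1)) with t in Hh by ring. rewrite !Rpower_1_base, Rmult_1_r in Hh.
    unfold ig. replace ((1 - Rpower t y) / (1 - t)) with ((Rpower t y - 1) / (t - 1)) by (field; lra).
    exact Hh.
  - assert (Hz' : 0 < z < 1) by lra.
    apply continuous_ext_loc with (ig y).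
    + exists (mkposreal (Rmin z (1 - z)) ltac:(apply Rmin_glb_lt; lra)).
      intros t Ht. unfold ball in Ht; simpl in Ht; unfold AbsRing_ball, abs, minus, plus, opp in Ht; simpl in Ht.
      pose proof (Rmin_l z (1 - z)). pose proof (Rmin_r z (1 - z)).
      pose proof (Rle_abs (t + - z)). pose proof (Rle_abs (- (t + - z))). rewrite Rabs_Ropp in *.
      unfold Ext. destruct (Rle_dec t 0). lra. destruct (Rle_dec 1 t). lra. reflexivity.
    + apply continuity_pt_filterlim. unfold ig.
      apply (continuity_pt_div (fun t => 1 - Rpower t y) (fun t => 1 - t)).
      * apply continuity_pt_minus. apply continuity_pt_const; intros a b; reflexivity.
        apply derivable_continuous_pt. exists (y * Rpower z (y - 1)). apply derivable_pt_lim_power; lra.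
      * apply continuity_pt_minus. apply continuity_pt_const; intros a b; reflexivity.
        apply continuity_pt_id.
      * lra.
Qed.

Lemma Rpower_0_exp t : Rpower t 0 = 1.
Proof. unfold Rpower. rewrite Rmult_0_l, exp_0. reflexivity. Qed.

Lemma ig_ex y : 0 <= y -> ex_RInt (ig y) 0 1.
Proof.
  intros Hy. destruct (Req_dec y 0) as [Y|Y].
  - subst y. apply (ex_RInt_ext (fun _ => 0) (ig 0)).
    intros t _. unfold ig. rewrite Rpower_0_exp. unfold Rminus at 1. rewrite Rplus_opp_r. unfold Rdiv. rewrite Rmult_0_l. reflexivity.
    apply ex_RInt_const.
  - apply (ex_RInt_ext (Ext y) (ig y)).
    + rewrite Rmin_left, Rmax_right by lra. intros t Ht.
      unfold Ext. destruct (Rle_dec t 0). lra. destruct (Rle_dec 1 t). lra. reflexivity.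
    + apply (@ex_RInt_continuous R_CompleteNormedModule). rewrite Rmin_left, Rmax_right by lra.
      intros z Hz. apply Ext_cont; lra.
Qed.

Lemma Hx_ig y : Hx y = RInt (ig y) 0 1.
Proof. reflexivity. Qed.

Lemma Hx_mono y1 y2 : 0 <= y1 -> y1 <= y2 -> Hx y1 <= Hx y2.
Proof.
  intros H1 H2. rewrite !Hx_ig. apply RInt_le; try lra; try (apply ig_ex; lra).
  intros t Ht. unfold ig, Rdiv. apply Rmult_le_compat_r. left; apply Rinv_0_lt_compat; lra.
  assert (ln t < 0) by (rewrite <- ln_1; apply ln_increasing; lra).
  assert (Rpower t y2 <= Rpower t y1); [|lra].
  unfold Rpower. destruct (Req_dec y1 y2). subst; lra.
  left; apply exp_increasing. nra.
Qed.

Lemma Hx_0 : Hx 0 = 0.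
Proof.
  rewrite Hx_ig. transitivity (RInt (fun _ => 0) 0 1).
  apply RInt_ext. intros t _. unfold ig. rewrite Rpower_0_exp. unfold Rdiv. rewrite Rminus_diag. apply Rmult_0_l.
  rewrite RInt_const. unfold scal; simpl; unfold mult; simpl. ring.
Qed.

Lemma RInt_pow n : RInt (fun t => t ^ n) 0 1 = / INR (S n).
Proof.
  pose (F := fun t => t ^ S n / INR (S n)).
  assert (H : is_RInt (fun t => t ^ n) 0 1 (minus (F 1) (F 0))).
  { apply (@is_RInt_derive R_CompleteNormedModule F).
    - intros x _. unfold F. auto_derive. auto. replace (match n with 0%nat => 1 | S _ => INR n + 1 end) with (INR (S n)) by reflexivity. field. rewrite S_INR. pose proof (pos_INR n). lra.
    - intros x _. apply (@ex_derive_continuous R_AbsRing R_NormedModule). auto_derive. auto. }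
  rewrite (is_RInt_unique _ _ _ _ H).
  unfold minus, plus, opp, F; simpl. rewrite pow1. replace (match n with 0%nat => 1 | S _ => INR n + 1 end) with (INR (S n)) by reflexivity. field. rewrite S_INR. pose proof (pos_INR n). lra.
Qed.

Lemma ex_RInt_pow n : ex_RInt (fun t => t ^ n) 0 1.
Proof.
  apply (@ex_RInt_continuous R_CompleteNormedModule). intros x _.
  apply (@ex_derive_continuous R_AbsRing R_NormedModule). auto_derive. auto.
Qed.

Lemma Hx_S n : Hx (INR (S n)) = Hx (INR n) + / INR (S n).
Proof.
  rewrite !Hx_ig. rewrite <- RInt_pow.
  transitivity (RInt (fun t => plus (ig (INR n) t) (t ^ n)) 0 1).
  - apply RInt_ext. rewrite Rmin_left, Rmax_right by lra. intros t Ht.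
    unfold ig. rewrite !Rpower_pow by lra. unfold plus; simpl. field. lra.
  - exact (@RInt_plus R_CompleteNormedModule _ _ 0 1 (ig_ex _ (pos_INR n)) (ex_RInt_pow n)).
Qed.

Lemma Hx_int n : (1 <= n)%nat -> Hx (INR n) = hs n.
Proof.
  induction 1.
  - rewrite Hx_S. change (INR 0) with 0. rewrite Hx_0, hs_1. simpl. field.
  - rewrite Hx_S, IHle, hs_S by lia. reflexivity.
Qed.

Lemma floor_facts x : 1 <= x -> exists n, (1 <= n)%nat /\ INR n <= x < INR n + 1.
Proof.
  intros H. destruct (nfloor_ex x ltac:(lra)) as [n Hn]. exists n. split; auto.
  destruct n; [simpl in Hn; lra|lia].
Qed.

Lemma bound_H x : 1 <= x -> Rabs (Hx x - euler_gamma - ln x) <= 4 * / x.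
Proof.
  intros Hx1. destruct (floor_facts x Hx1) as [n [Hn [Ha Hb]]].
  assert (Hn1 : 1 <= INR n) by (apply (le_INR 1); lia).
  destruct (gamma_bounds n Hn) as [G1 G2]. unfold Eg, Dg in *.
  pose proof (ln_step_hi n Hn).
  assert (L1 : ln (INR n) <= ln x) by (apply ln_le; lra).
  assert (L2 : ln x <= ln (INR n + 1)) by (apply ln_le; lra).
  assert (M1 : Hx (INR n) <= Hx x) by (apply Hx_mono; lra).
  assert (M2 : Hx x <= Hx (INR (S n))) by (apply Hx_mono; [lra|rewrite S_INR; lra]).
  rewrite Hx_S in M2. rewrite Hx_int in M1, M2 by auto.
  assert (U1 : / INR (S n) <= / INR n) by (apply Rinv_le_contravar; [lra|rewrite S_INR; lra]).
  assert (U2 : / INR n <= 2 * / x).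
  { replace (2 * / x) with (/ (x / 2)) by (field; lra). apply Rinv_le_contravar; lra. }
  assert (0 < / x) by (apply Rinv_0_lt_compat; lra).
  apply Rabs_le; split; lra.
Qed.

Lemma bound_Psi x : 1 <= x -> Rabs (Psi x - ln x) <= 4 * / x.
Proof.
  intros Hx1. destruct (floor_facts x Hx1) as [n [Hn [Ha Hb]]].
  assert (Hn1 : 1 <= INR n) by (apply (le_INR 1); lia).
  destruct (gamma_bounds n Hn) as [G1 G2]. unfold Eg, Dg in *.
  pose proof (ln_step_hi n Hn).
  assert (L1 : ln (INR n) <= ln x) by (apply ln_le; lra).
  assert (L2 : ln x <= ln (INR n + 1)) by (apply ln_le; lra).
  destruct n as [|m]; [lia|].
  assert (M1 : Hx (INR m) <= Hx (x - 1)) by (apply Hx_mono; [apply pos_INR|rewrite S_INR in Ha; lra]).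
  assert (M2 : Hx (x - 1) <= Hx (INR (S m))) by (apply Hx_mono; [lra|rewrite S_INR in *; lra]).
  rewrite Hx_int in M2 by auto.
  assert (E : Hx (INR m) = hs (S m) - / INR (S m)) by (pose proof (Hx_S m) as HS; rewrite Hx_int in HS by lia; lra). rewrite E in M1.
  assert (U2 : / INR (S m) <= 2 * / x).
  { replace (2 * / x) with (/ (x / 2)) by (field; lra). apply Rinv_le_contravar; lra. }
  assert (0 < / x) by (apply Rinv_0_lt_compat; lra).
  unfold Psi. apply Rabs_le; split; lra.
Qed.
Lemma asymp_comp (F G : (R -> Prop) -> Prop) (u : R -> R) h a phi N :
  filterlim u F G -> asymp_expansion G h a phi N ->
  asymp_expansion F (fun x => h (u x)) a (fun k x => phi k (u x)) N.
Proof.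
  intros Hu H n Hn eps He. exact (Hu _ (H n Hn eps He)).
Qed.

Lemma asymp_ext F h h' a phi phi' N :
  asymp_expansion F h a phi N -> (forall x, h' x = h x) ->
  (forall k x, phi' k x = phi k x) -> asymp_expansion F h' a phi' N.
Proof.
  intros H E1 E2.
  replace h' with h by (apply functional_extensionality; intros; now rewrite E1).
  replace phi' with phi. exact H.
  apply functional_extensionality; intro k; apply functional_extensionality; intro x; now rewrite E2.
Qed.

Lemma fl_invln : filterlim (fun x => / ln x) (Rbar_locally p_infty) (at_right 0).
Proof.
  intros P [d Hd]. exists (exp (/ d)). intros x Hx.
  assert (Hd0 := cond_pos d).
  assert (Hx0 : 0 < x) by (pose proof (exp_pos (/d)); lra).
  assert (Hl : / d < ln x).
  { rewrite <- (ln_exp (/d)). apply ln_increasing; auto. apply exp_pos. }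
  assert (Hl0 : 0 < ln x). { pose proof (Rinv_0_lt_compat d Hd0). lra. }
  apply Hd.
  - unfold ball; simpl; unfold AbsRing_ball, abs, minus, plus, opp; simpl.
    rewrite Ropp_0, Rplus_0_r, Rabs_pos_eq by (left; now apply Rinv_0_lt_compat).
    rewrite <- (Rinv_inv d). apply Rinv_lt_contravar; auto.
    apply Rmult_lt_0_compat; auto. now apply Rinv_0_lt_compat.
  - now apply Rinv_0_lt_compat.
Qed.

Lemma fl_expinv : filterlim (fun t => exp (/ t)) (at_right 0) (Rbar_locally p_infty).
Proof.
  intros P [M HM]. exists (mkposreal (/ (Rmax M 1)) (Rinv_0_lt_compat _ (Rlt_le_trans _ _ _ Rlt_0_1 (Rmax_r M 1)))).
  intros t Ht Ht0. simpl in Ht. unfold ball in Ht; simpl in Ht; unfold AbsRing_ball, abs, minus, plus, opp in Ht; simpl in Ht.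
  rewrite Ropp_0, Rplus_0_r, Rabs_pos_eq in Ht by lra.
  apply HM.
  assert (H1 : Rmax M 1 < / t).
  { rewrite <- (Rinv_inv (Rmax M 1)). apply Rinv_lt_contravar; auto.
    apply Rmult_lt_0_compat; auto. apply Rinv_0_lt_compat. pose proof (Rmax_r M 1); lra. }
  pose proof (Rmax_l M 1).
  assert (Hne : / t <> 0) by (apply Rinv_neq_0_compat; lra).
  pose proof (exp_ineq1 (/t) Hne). lra.
Qed.

Lemma fl_inv_p : filterlim (fun x => / x) (Rbar_locally p_infty) (at_right 0).
Proof.
  intros P [d Hd]. exists (/ d). intros x Hx.
  assert (Hd0 := cond_pos d). assert (Hx0 : 0 < x) by (pose proof (Rinv_0_lt_compat d Hd0); lra).
  apply Hd.
  - unfold ball; simpl; unfold AbsRing_ball, abs, minus, plus, opp; simpl.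
    rewrite Ropp_0, Rplus_0_r, Rabs_pos_eq by (left; now apply Rinv_0_lt_compat).
    rewrite <- (Rinv_inv d). apply Rinv_lt_contravar; auto.
    apply Rmult_lt_0_compat; auto. now apply Rinv_0_lt_compat.
  - now apply Rinv_0_lt_compat.
Qed.

Lemma fl_inv_0 : filterlim (fun t => / t) (at_right 0) (Rbar_locally p_infty).
Proof.
  intros P [M HM]. exists (mkposreal (/ (Rmax M 1)) (Rinv_0_lt_compat _ (Rlt_le_trans _ _ _ Rlt_0_1 (Rmax_r M 1)))).
  intros t Ht Ht0. simpl in Ht. unfold ball in Ht; simpl in Ht; unfold AbsRing_ball, abs, minus, plus, opp in Ht; simpl in Ht.
  rewrite Ropp_0, Rplus_0_r, Rabs_pos_eq in Ht by lra.
  apply HM.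
  assert (H1 : Rmax M 1 < / t).
  { rewrite <- (Rinv_inv (Rmax M 1)). apply Rinv_lt_contravar; auto.
    apply Rmult_lt_0_compat; auto. apply Rinv_0_lt_compat. pose proof (Rmax_r M 1); lra. }
  pose proof (Rmax_l M 1). lra.
Qed.
Lemma pow_diff_bound x y M j : 0 <= M -> Rabs x <= M -> Rabs y <= M ->
  Rabs (x ^ S j - y ^ S j) <= INR (S j) * Rabs (x - y) * M ^ j.
Proof.
  intros HM Hx Hy. induction j.
  - simpl. rewrite !Rmult_1_r. lra.
  - replace (x ^ S (S j) - y ^ S (S j)) with (x ^ S j * (x - y) + y * (x ^ S j - y ^ S j)) by (simpl; ring).
    eapply Rle_trans; [apply Rabs_triang|]. rewrite !Rabs_mult.
    assert (A1 : Rabs (x ^ S j) <= M ^ S j) by (rewrite <- RPow_abs; apply pow_incr; split; [apply Rabs_pos|lra]).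
    pose proof (Rabs_pos (x - y)). pose proof (Rabs_pos y).
    pose proof (Rabs_pos (x ^ S j - y ^ S j)).
    assert (A2 : Rabs (x ^ S j) * Rabs (x - y) <= M ^ S j * Rabs (x - y)) by (apply Rmult_le_compat_r; lra).
    assert (A3 : Rabs y * Rabs (x ^ S j - y ^ S j) <= M * (INR (S j) * Rabs (x - y) * M ^ j)).
    { apply Rmult_le_compat; auto. }
    rewrite S_INR. simpl in *. nra.
Qed.

Lemma keyD (l L d : R) N n j : 1 <= l -> 0 < L -> l <= 2 * L -> L <= 2 * l ->
  (S j <= n)%nat -> (n <= N)%nat -> Rabs (L - l) * l ^ N <= d * l ^ 2 -> 0 <= d ->
  Rabs (/ l ^ S j - / L ^ S j) <= INR n * 4 ^ n * d * / l ^ n.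
Proof.
  intros H1 H2 H3 H4 Hjn HnN Hd Hd0.
  set (k := S j) in *.
  assert (Plk : 0 < l ^ k) by (apply pow_lt; lra).
  assert (PLk : 0 < L ^ k) by (apply pow_lt; lra).
  assert (Pln : 0 < l ^ n) by (apply pow_lt; lra).
  set (A := Rabs (L - l)) in *. assert (HA : 0 <= A) by apply Rabs_pos.
  assert (PD : Rabs (L ^ k - l ^ k) <= INR k * A * (2 * l) ^ j).
  { apply pow_diff_bound; rewrite ?Rabs_pos_eq; lra. }
  rewrite Rpow_mult_distr in PD.
  assert (P1 : A * l ^ (n + j) <= d * l ^ k * l ^ k).
  { assert (HH : l ^ (n + j) <= l ^ (N + 2 * j)) by (apply Rle_pow; [lra|lia]).
    rewrite (pow_add l N) in HH. 
    assert (A * l ^ (n + j) <= A * (l ^ N * l ^ (2 * j))) by (apply Rmult_le_compat_l; lra).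
    assert (E : l ^ k * l ^ k = l ^ 2 * l ^ (2 * j)) by (rewrite <- !pow_add; f_equal; unfold k; lia).
    rewrite Rmult_assoc, E.
    assert (0 <= l ^ (2 * j)) by (apply pow_le; lra).
    nra. }
  assert (P3 : l ^ k <= 2 ^ k * L ^ k) by (rewrite <- Rpow_mult_distr; apply pow_incr; lra).
  assert (P4 : INR k * 2 ^ j * 2 ^ k <= INR n * 4 ^ n).
  { replace 4 with (2 * 2) by ring. rewrite Rpow_mult_distr.
    assert (INR k <= INR n) by (apply le_INR; lia).
    assert (2 ^ j <= 2 ^ n) by (apply Rle_pow; [lra|lia]).
    assert (2 ^ k <= 2 ^ n) by (apply Rle_pow; [lra|lia]).
    assert (0 <= INR k) by apply pos_INR.
    assert (0 < 2 ^ j) by (apply pow_lt; lra). assert (0 < 2 ^ k) by (apply pow_lt; lra).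
    assert (INR k * 2 ^ j <= INR n * 2 ^ n) by (apply Rmult_le_compat; lra).
    rewrite <- Rmult_assoc. apply Rmult_le_compat; try lra. nra. }
  assert (MAIN : Rabs (L ^ k - l ^ k) * l ^ n <= INR n * 4 ^ n * d * l ^ k * L ^ k).
  { assert (Q1 : Rabs (L ^ k - l ^ k) * l ^ n <= INR k * A * (2 ^ j * l ^ j) * l ^ n)
      by (apply Rmult_le_compat_r; lra).
    assert (Q2 : INR k * A * (2 ^ j * l ^ j) * l ^ n = INR k * 2 ^ j * (A * l ^ (n + j)))
      by (rewrite pow_add; ring).
    assert (0 <= INR k * 2 ^ j) by (apply Rmult_le_pos; [apply pos_INR| apply pow_le; lra]).
    assert (Q3 : INR k * 2 ^ j * (A * l ^ (n + j)) <= INR k * 2 ^ j * (d * l ^ k * l ^ k))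
      by (apply Rmult_le_compat_l; lra).
    assert (Q4 : d * l ^ k * l ^ k <= d * l ^ k * (2 ^ k * L ^ k))
      by (apply Rmult_le_compat_l; [apply Rmult_le_pos; lra|lra]).
    assert (Q5 : INR k * 2 ^ j * (d * l ^ k * (2 ^ k * L ^ k)) = (INR k * 2 ^ j * 2 ^ k) * (d * l ^ k * L ^ k)) by ring.
    assert (0 <= d * l ^ k * L ^ k) by (apply Rmult_le_pos; [apply Rmult_le_pos|]; lra).
    assert (Q6 : (INR k * 2 ^ j * 2 ^ k) * (d * l ^ k * L ^ k) <= INR n * 4 ^ n * (d * l ^ k * L ^ k))
      by (apply Rmult_le_compat_r; lra).
    nra. }
  replace (/ l ^ k - / L ^ k) with ((L ^ k - l ^ k) * / (l ^ k * L ^ k)) by (field; lra).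
  rewrite Rabs_mult, (Rabs_pos_eq (/ _)) by (left; apply Rinv_0_lt_compat; nra).
  replace (Rabs (L ^ k - l ^ k) * / (l ^ k * L ^ k)) with
    ((Rabs (L ^ k - l ^ k) * l ^ n) * / (l ^ k * L ^ k * l ^ n)) by (field; lra).
  replace (INR n * 4 ^ n * d * / l ^ n) with
    ((INR n * 4 ^ n * d * l ^ k * L ^ k) * / (l ^ k * L ^ k * l ^ n)) by (field; lra).
  apply Rmult_le_compat_r; [|exact MAIN]. left. apply Rinv_0_lt_compat. apply Rmult_lt_0_compat; [apply Rmult_lt_0_compat|]; assumption.
Qed.
Lemma Cdiff_eq (s1 s2 : C) (a : C) (p q : R) :
  Cminus (Cplus s1 (Cmult a (RtoC p))) (Cplus s2 (Cmult a (RtoC q))) =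
  Cplus (Cminus s1 s2) (Cmult a (RtoC (p - q))).
Proof.
  destruct s1, s2, a; apply injective_projections; simpl; ring.
Qed.

Lemma sum_bound (a : nat -> C) (p q : nat -> R) n d :
  (forall k, (k <= n)%nat -> Rabs (p k - q k) <= d) ->
  Cmod (Cminus (sum_n (fun k => Cmult (a k) (RtoC (p k))) n)
               (sum_n (fun k => Cmult (a k) (RtoC (q k))) n))
  <= d * sum_n (fun k => Cmod (a k)) n.
Proof.
  induction n; intros H.
  - rewrite !sum_O.
    replace (Cminus (Cmult (a 0%nat) (RtoC (p 0%nat))) (Cmult (a 0%nat) (RtoC (q 0%nat))))
      with (Cmult (a 0%nat) (RtoC (p 0%nat - q 0%nat)))
      by (destruct (a 0%nat); apply injective_projections; simpl; ring).
    rewrite Cmod_mult, Cmod_R. specialize (H 0%nat (le_n _)).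
    pose proof (Cmod_ge_0 (a 0%nat)). nra.
  - rewrite !sum_Sn. unfold plus; simpl. 
    rewrite Cdiff_eq.
    eapply Rle_trans; [apply Cmod_triangle|].
    rewrite Cmod_mult, Cmod_R.
    assert (IH := IHn (fun k Hk => H k (le_S _ _ Hk))).
    assert (H1 := H (S n) (le_n _)). pose proof (Cmod_ge_0 (a (S n))).
    nra.
Qed.

Lemma sum_Cmod_ge0 (a : nat -> C) n : 0 <= sum_n (fun k => Cmod (a k)) n.
Proof.
  induction n. rewrite sum_O; apply Cmod_ge_0.
  rewrite sum_Sn. unfold plus; simpl. pose proof (Cmod_ge_0 (a (S n))). lra.
Qed.

Lemma transfer (F : (R -> Prop) -> Prop) (FF : Filter F) h a (p q : nat -> R -> R) N :
  (forall n, (n <= N)%nat -> exists C, 0 <= C /\ F (fun x => Rabs (p n x) <= C * Rabs (q n x))) ->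
  (forall n, (n <= N)%nat -> forall e, 0 < e ->
     F (fun x => forall k, (k <= n)%nat -> Rabs (p k x - q k x) <= e * Rabs (q n x))) ->
  asymp_expansion F h a p N -> asymp_expansion F h a q N.
Proof.
  intros T1 T2 H n Hn eps He.
  destruct (T1 n Hn) as [C [HC FC]].
  set (A := sum_n (fun k => Cmod (a k)) n).
  assert (HA : 0 <= A) by apply sum_Cmod_ge0.
  set (e1 := eps / (2 * (C + 1))). set (e2 := eps / (2 * (A + 1))).
  assert (He1 : 0 < e1) by (unfold e1; apply Rdiv_lt_0_compat; lra).
  assert (He2 : 0 < e2) by (unfold e2; apply Rdiv_lt_0_compat; lra).
  assert (E1 : e1 * (C + 1) = eps / 2) by (unfold e1; field; lra).
  assert (E2 : e2 * (A + 1) = eps / 2) by (unfold e2; field; lra).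
  generalize (filter_and _ _ FC (filter_and _ _ (H n Hn e1 He1) (T2 n Hn e2 He2))).
  apply filter_imp. intros x [B1 [B2 B3]].
  set (Sp := sum_n (fun k => Cmult (a k) (RtoC (p k x))) n) in *.
  set (Sq := sum_n (fun k => Cmult (a k) (RtoC (q k x))) n).
  assert (Eq : Cminus (h x) Sq = Cplus (Cminus (h x) Sp) (Cminus Sp Sq))
    by (destruct (h x), Sp, Sq; apply injective_projections; simpl; ring).
  rewrite Eq. eapply Rle_trans; [apply Cmod_triangle|].
  assert (B4 : Cmod (Cminus Sp Sq) <= e2 * Rabs (q n x) * A)
    by exact (sum_bound a (fun k => p k x) (fun k => q k x) n _ B3).
  pose proof (Rabs_pos (q n x)). pose proof (Rabs_pos (p n x)).
  assert (e1 * Rabs (p n x) <= e1 * (C * Rabs (q n x))) by (apply Rmult_le_compat_l; lra).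
  assert (e1 * (C * Rabs (q n x)) <= eps / 2 * Rabs (q n x)).
  { rewrite <- E1, <- Rmult_assoc. apply Rmult_le_compat_r; [lra|]. apply Rmult_le_compat_l; lra. }
  assert (e2 * Rabs (q n x) * A <= eps / 2 * Rabs (q n x)).
  { rewrite <- E2. replace (e2 * Rabs (q n x) * A) with ((e2 * A) * Rabs (q n x)) by ring.
    apply Rmult_le_compat_r; [lra|]. apply Rmult_le_compat_l; lra. }
  lra.
Qed.

Lemma inv_pow_cmp u v n : 0 < u -> 0 < v -> v <= 2 * u -> / u ^ n <= 2 ^ n * / v ^ n.
Proof.
  intros Hu Hv H.
  assert (0 < u ^ n) by (apply pow_lt; lra). assert (0 < v ^ n) by (apply pow_lt; lra).
  assert (0 < 2 ^ n) by (apply pow_lt; lra).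
  assert (v ^ n <= 2 ^ n * u ^ n) by (rewrite <- Rpow_mult_distr; apply pow_incr; lra).
  replace (/ u ^ n) with (2 ^ n * / (2 ^ n * u ^ n)) by (field; lra).
  apply Rmult_le_compat_l; [lra|]. apply Rinv_le_contravar; lra.
Qed.

Definition good (l L : R -> R) N d x :=
  1 <= l x /\ 0 < L x /\ l x <= 2 * L x /\ L x <= 2 * l x /\ Rabs (L x - l x) * l x ^ N <= d * l x ^ 2.

Lemma goodF (F : (R -> Prop) -> Prop) (FF : Filter F) (l L : R -> R) N :
  (1 <= N)%nat -> F (fun x => 1 <= l x) ->
  (forall d, 0 < d -> F (fun x => Rabs (L x - l x) * l x ^ N <= d * l x ^ 2)) ->
  forall d, 0 < d -> F (good l L N d).
Proof.
  intros HN H1 H2 d Hd.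
  assert (Hm : 0 < Rmin d (1/2)) by (apply Rmin_glb_lt; lra).
  generalize (filter_and _ _ H1 (H2 _ Hm)). apply filter_imp. intros x [Hl Hb].
  assert (Hmd := Rmin_l d (1/2)). assert (Hm2 := Rmin_r d (1/2)).
  assert (A0 := Rabs_pos (L x - l x)).
  assert (Hp : l x <= l x ^ N) by (rewrite <- (pow_1 (l x)) at 1; apply Rle_pow; [lra|lia]).
  assert (Hl2 : 0 <= l x ^ 2) by (apply pow_le; lra).
  assert (B : Rabs (L x - l x) * l x <= 1/2 * l x ^ 2).
  { apply Rle_trans with (Rabs (L x - l x) * l x ^ N). apply Rmult_le_compat_l; lra.
    apply Rle_trans with (Rmin d (1/2) * l x ^ 2); [lra|]. apply Rmult_le_compat_r; lra. }
  assert (B2 : Rabs (L x - l x) <= l x / 2) by (simpl in B; nra).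
  pose proof (Rle_abs (L x - l x)). pose proof (Rle_abs (- (L x - l x))). rewrite Rabs_Ropp in *.
  unfold good. repeat split; try lra.
  apply Rle_trans with (Rmin d (1/2) * l x ^ 2); [lra|]. apply Rmult_le_compat_r; lra.
Qed.

Lemma good_T2 l L N d x n k : good l L N d x -> 0 <= d -> (k <= n)%nat -> (n <= N)%nat ->
  Rabs (/ l x ^ k - / L x ^ k) <= INR n * 4 ^ n * d * / l x ^ n.
Proof.
  intros [H1 [H2 [H3 [H4 H5]]]] Hd Hk Hn.
  assert (0 <= INR n * 4 ^ n * d * / l x ^ n).
  { apply Rmult_le_pos. apply Rmult_le_pos; [apply Rmult_le_pos; [apply pos_INR|apply pow_le; lra]|lra].
    left; apply Rinv_0_lt_compat, pow_lt; lra. }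
  destruct k. simpl. rewrite Rminus_diag, Rabs_R0. lra.
  eapply keyD; eauto.
Qed.

Lemma core (F : (R -> Prop) -> Prop) (FF : Filter F) h a N (l L : R -> R) :
  (1 <= N)%nat -> F (fun x => 1 <= l x) ->
  (forall d, 0 < d -> F (fun x => Rabs (L x - l x) * l x ^ N <= d * l x ^ 2)) ->
  (asymp_expansion F h a (fun k x => / l x ^ k) N <->
   asymp_expansion F h a (fun k x => / L x ^ k) N).
Proof.
  intros HN H1 H2. assert (G := goodF F FF l L N HN H1 H2).
  assert (G1 := G 1 Rlt_0_1).
  split; apply transfer; auto.
  - intros n Hn. exists (2 ^ n). split; [apply pow_le; lra|].
    generalize G1; apply filter_imp. intros x [A1 [A2 [A3 [A4 A5]]]].
    rewrite !Rabs_pos_eq by (left; apply Rinv_0_lt_compat, pow_lt; lra).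
    apply inv_pow_cmp; lra.
  - intros n Hn e He.
    set (d := e / ((INR n * 4 ^ n + 1) * 2 ^ n)).
    assert (P4 : 0 <= INR n * 4 ^ n) by (apply Rmult_le_pos; [apply pos_INR|apply pow_le; lra]).
    assert (P2 : 0 < 2 ^ n) by (apply pow_lt; lra).
    assert (Hd : 0 < d) by (unfold d; apply Rdiv_lt_0_compat; [lra|]; apply Rmult_lt_0_compat; lra).
    assert (Hd2 : INR n * 4 ^ n * d * 2 ^ n <= e).
    { unfold d. replace (INR n * 4 ^ n * (e / ((INR n * 4 ^ n + 1) * 2 ^ n)) * 2 ^ n)
        with (e * (INR n * 4 ^ n / (INR n * 4 ^ n + 1))) by (field; lra).
      assert (INR n * 4 ^ n / (INR n * 4 ^ n + 1) <= 1).
      { apply Rmult_le_reg_r with (INR n * 4 ^ n + 1); [lra|]. field_simplify; lra. }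
      nra. }
    generalize (G d Hd). apply filter_imp. intros x Hg k Hk.
    assert (T := good_T2 l L N d x n k Hg (Rlt_le _ _ Hd) Hk Hn).
    destruct Hg as [A1 [A2 [A3 [A4 A5]]]].
    assert (C := inv_pow_cmp (l x) (L x) n ltac:(lra) ltac:(lra) ltac:(lra)).
    rewrite (Rabs_pos_eq (/ L x ^ n)) by (left; apply Rinv_0_lt_compat, pow_lt; lra).
    assert (0 <= INR n * 4 ^ n * d) by (apply Rmult_le_pos; lra).
    apply Rle_trans with (INR n * 4 ^ n * d * (2 ^ n * / L x ^ n)).
    { eapply Rle_trans; [exact T|]. apply Rmult_le_compat_l; auto. }
    assert (0 <= / L x ^ n) by (left; apply Rinv_0_lt_compat, pow_lt; lra).
    replace (INR n * 4 ^ n * d * (2 ^ n * / L x ^ n)) with ((INR n * 4 ^ n * d * 2 ^ n) * / L x ^ n) by ring.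
    apply Rmult_le_compat_r; auto.
  - intros n Hn. exists (2 ^ n). split; [apply pow_le; lra|].
    generalize G1; apply filter_imp. intros x [A1 [A2 [A3 [A4 A5]]]].
    rewrite !Rabs_pos_eq by (left; apply Rinv_0_lt_compat, pow_lt; lra).
    apply inv_pow_cmp; lra.
  - intros n Hn e He.
    set (d := e / ((INR n * 4 ^ n + 1) * 2 ^ n)).
    assert (P4 : 0 <= INR n * 4 ^ n) by (apply Rmult_le_pos; [apply pos_INR|apply pow_le; lra]).
    assert (P2 : 1 <= 2 ^ n) by (apply pow_R1_Rle; lra).
    assert (Hd : 0 < d) by (unfold d; apply Rdiv_lt_0_compat; [lra|]; apply Rmult_lt_0_compat; lra).
    assert (Hd2 : INR n * 4 ^ n * d <= e).
    { unfold d. replace (INR n * 4 ^ n * (e / ((INR n * 4 ^ n + 1) * 2 ^ n)))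
        with (e * (INR n * 4 ^ n / ((INR n * 4 ^ n + 1) * 2 ^ n))) by (field; lra).
      assert (INR n * 4 ^ n / ((INR n * 4 ^ n + 1) * 2 ^ n) <= 1).
      { apply Rmult_le_reg_r with ((INR n * 4 ^ n + 1) * 2 ^ n); [nra|]. field_simplify; nra. }
      nra. }
    generalize (G d Hd). apply filter_imp. intros x Hg k Hk.
    assert (T := good_T2 l L N d x n k Hg (Rlt_le _ _ Hd) Hk Hn).
    destruct Hg as [A1 [A2 [A3 [A4 A5]]]].
    rewrite Rabs_minus_sym.
    rewrite (Rabs_pos_eq (/ l x ^ n)) by (left; apply Rinv_0_lt_compat, pow_lt; lra).
    eapply Rle_trans; [exact T|].
    assert (0 <= / l x ^ n) by (left; apply Rinv_0_lt_compat, pow_lt; lra).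
    apply Rmult_le_compat_r; auto.
Qed.

Lemma exp_pow_n m z : exp (INR m * z) = exp z ^ m.
Proof.
  induction m. simpl. rewrite Rmult_0_l, exp_0. reflexivity.
  rewrite S_INR. replace ((INR m + 1) * z) with (z + INR m * z) by ring.
  rewrite exp_plus, IHm. simpl. reflexivity.
Qed.

Lemma exp_ge_pow M y : 0 <= y -> y ^ (S M) <= INR (S M) ^ (S M) * exp y.
Proof.
  intros Hy. set (m := INR (S M)). assert (Hm : 0 < m) by (unfold m; apply lt_0_INR; lia).
  assert (E : exp y = exp (y / m) ^ S M).
  { rewrite <- exp_pow_n. f_equal. unfold m. field. fold m. lra. }
  assert (H1 : (y / m) ^ S M <= exp (y / m) ^ S M).
  { apply pow_incr. split. apply Rdiv_le_0_compat; lra. pose proof (exp_ineq1_le (y / m)). lra. }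
  rewrite <- E in H1. unfold Rdiv in H1. rewrite Rpow_mult_distr in H1.
  assert (0 < m ^ S M) by (apply pow_lt; lra).
  replace (y ^ S M) with (m ^ S M * (y ^ S M * (/ m) ^ S M)).
  apply Rmult_le_compat_l; lra.
  rewrite <- Rpow_mult_distr. rewrite <- Rpow_mult_distr. replace (m * (y * / m)) with y by (field; lra). reflexivity.
Qed.

Lemma small_eventually N d : 0 < d ->
  Rbar_locally p_infty (fun x => 1 <= x /\ 1 <= ln x /\ 4 * / x * ln x ^ N <= d).
Proof.
  intros Hd. set (K := INR (S N) ^ S N).
  assert (HK : 0 < K) by (unfold K; apply pow_lt, lt_0_INR; lia).
  exists (exp (Rmax 1 (4 * K / d))). intros x Hx.
  pose proof (Rmax_l 1 (4 * K / d)). pose proof (Rmax_r 1 (4 * K / d)).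
  pose proof (exp_ineq1_le (Rmax 1 (4 * K / d))).
  assert (Hx0 : 0 < x) by lra.
  assert (Hy : Rmax 1 (4 * K / d) < ln x).
  { rewrite <- (ln_exp (Rmax 1 (4 * K / d))). apply ln_increasing; auto. apply exp_pos. }
  set (y := ln x) in *.
  assert (Ex : x = exp y) by (unfold y; rewrite exp_ln; auto).
  split; [lra|]. split; [lra|].
  assert (P := exp_ge_pow N y ltac:(lra)). fold K in P. rewrite <- Ex in P.
  simpl in P. 
  assert (Hy2 : 4 * K <= d * y).
  { assert (4 * K / d * d <= y * d) by (apply Rmult_le_compat_r; lra).
    replace (4 * K / d * d) with (4 * K) in H2 by (field; lra). lra. }
  assert (0 <= y ^ N) by (apply pow_le; lra).
  assert (4 * y ^ N * y <= d * y * x) by nra.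
  assert (4 * y ^ N <= d * x).
  { apply Rmult_le_reg_r with y; [lra|]. lra. }
  replace (4 * / x * y ^ N) with ((4 * y ^ N) * / x) by ring.
  apply Rmult_le_reg_r with x; auto. rewrite Rmult_assoc, Rinv_l by lra. lra.
Qed.

Lemma eventually_from_bound (L : R -> R) N :
  (forall x, 1 <= x -> Rabs (L x - ln x) <= 4 * / x) ->
  forall d, 0 < d -> Rbar_locally p_infty (fun x => Rabs (L x - ln x) * ln x ^ N <= d * ln x ^ 2).
Proof.
  intros HB d Hd. generalize (small_eventually N d Hd). apply filter_imp.
  intros x [H1 [H2 H3]]. specialize (HB x H1).
  assert (0 <= ln x ^ N) by (apply pow_le; lra).
  assert (1 <= ln x ^ 2) by (simpl; nra).
  assert (Rabs (L x - ln x) * ln x ^ N <= 4 * / x * ln x ^ N) by (apply Rmult_le_compat_r; auto).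
  nra.
Qed.

Lemma ln_ge1_ev : Rbar_locally p_infty (fun x => 1 <= ln x).
Proof.
  generalize (small_eventually 0 1 Rlt_0_1). apply filter_imp. tauto.
Qed.

Theorem proposition7p5 (f : R -> C) (a : nat -> C) (N : nat) (L : R -> R)
  (HN : (1 <= N)%nat)
  (HL : little_o_R (Rbar_locally p_infty) (fun x => L x - ln x)
          (fun x => powerRZ (ln x) (- (Z.of_nat N - 2)))) :
  let g := fun x : R => f (/ ln x) in
  let E1 := asymp_expansion (at_right 0) f a (fun n x => x ^ n) N in
  let E2 := asymp_expansion (Rbar_locally p_infty) (fun x => g (exp x)) a
              (fun n x => / x ^ n) N in
  let E3 := asymp_expansion (Rbar_locally p_infty) g a
              (fun n x => / (L x) ^ n) N in
  let E4 := asymp_expansion (Rbar_locally p_infty) g a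
              (fun n x => / (ln x) ^ n) N in
  let E5 := asymp_expansion (Rbar_locally p_infty) g a
              (fun n x => / (Hx x - euler_gamma) ^ n) N in
  let E6 := asymp_expansion (Rbar_locally p_infty) g a
              (fun n x => / (Psi x) ^ n) N in
  (E1 <-> E2) /\ (E1 <-> E3) /\ (E1 <-> E4) /\ (E1 <-> E5) /\ (E1 <-> E6).
Proof.
  cbv zeta.
  assert (E14 : asymp_expansion (at_right 0) f a (fun n x => x ^ n) N <->
                asymp_expansion (Rbar_locally p_infty) (fun x => f (/ ln x)) a (fun n x => / (ln x) ^ n) N).
  { split; intro H.
    - apply (asymp_ext _ _ _ _ _ _ _ (asymp_comp _ _ _ _ _ _ _ fl_invln H)).
      reflexivity. intros k x. rewrite pow_inv. reflexivity.
    - apply (asymp_ext _ _ _ _ _ _ _ (asymp_comp _ _ _ _ _ _ _ fl_expinv H)).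
      intros t. rewrite ln_exp, Rinv_inv. reflexivity.
      intros k t. rewrite ln_exp, pow_inv, Rinv_inv. reflexivity. }
  assert (Ev := ln_ge1_ev).
  assert (FF : Filter (Rbar_locally p_infty)) by apply Rbar_locally_filter.
  split; [|split; [|split; [|split]]].
  - split; intro H.
    + apply (asymp_ext _ _ _ _ _ _ _ (asymp_comp _ _ _ _ _ _ _ fl_inv_p H)).
      intros x. rewrite ln_exp. reflexivity. intros k x. rewrite pow_inv. reflexivity.
    + apply (asymp_ext _ _ _ _ _ _ _ (asymp_comp _ _ _ _ _ _ _ fl_inv_0 H)).
      intros t. rewrite ln_exp, Rinv_inv. reflexivity.
      intros k t. rewrite pow_inv, Rinv_inv. reflexivity.
  - rewrite E14. apply core; auto.
    intros d Hd. generalize (filter_and _ _ Ev (HL d Hd)). apply filter_imp.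
    intros x [H1 H2].
    assert (Hp : 0 < powerRZ (ln x) (- (Z.of_nat N - 2))) by (apply powerRZ_lt; lra).
    rewrite (Rabs_pos_eq (powerRZ _ _)) in H2 by lra.
    assert (Eq : powerRZ (ln x) (- (Z.of_nat N - 2)) * ln x ^ N = ln x ^ 2).
    { rewrite !pow_powerRZ, <- powerRZ_add by lra. f_equal. lia. }
    assert (0 <= ln x ^ N) by (apply pow_le; lra).
    assert (Rabs (L x - ln x) * ln x ^ N <= d * powerRZ (ln x) (- (Z.of_nat N - 2)) * ln x ^ N)
      by (apply Rmult_le_compat_r; auto).
    rewrite Rmult_assoc, Eq in H0. exact H0.
  - exact E14.
  - rewrite E14. apply core; auto.
    apply eventually_from_bound. intros x Hx1. apply bound_H; auto.
  - rewrite E14. apply core; auto.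
    apply eventually_from_bound. intros x Hx1. apply bound_Psi; auto.
Qed.
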